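(* For $\varepsilon\in(0,1)$ and integers $j\ge 1$ define \[ A_{j,\varepsilon}= \begin{cases} \dfrac{2(-1)^{(j-1)/2}}{(j-2)\bigl(\frac{1}{2}(j-3)\bigr)!\sqrt{\pi}}, & \text{if } j\ge 3 \text{ and } j \text{ is odd},\\[1ex] \varepsilon, & \text{otherwise}. \end{cases} \] Then for every real $x$, \[ \int_{0}^{x} \exp\bigl(-\xi^{2}\operatorname{erf}(\xi)\bigr)\,d\xi =\sum_{n=0}^{\infty} \lim_{\varepsilon\to 0} \left( \sum_{\substack{k_{1}+2k_{2}+\cdots+nk_{n}=n\\ k_{1},k_{2},\dots,k_{n}\ge 0}} \prod_{j=1}^{n} \frac{A_{j,\varepsilon}^{\,k_{j}}}{k_{j}!} \right)\frac{x^{n+1}}{n+1}, \] where the inner sum runs over all tuples of nonnegative integers $(k_1,\dots,k_n)$ with $\sum_{j=1}^n jk_j=n$ (for $n=0$ the inner sum is the empty product, equal to $1$).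
   Context: $\operatorname{erf}(x)=\frac{2}{\sqrt{\pi}}\int_0^x e^{-s^2}\,ds$ is the Gauss error function. *)

(* Defs.v *)
From Stdlib Require Import Reals Factorial.
From Coquelicot Require Import Coquelicot.
From mathcomp Require Import ssreflect ssrbool ssrfun eqtype ssrnat seq fintype finfun bigop.

Open Scope R_scope.

Definition erf (x : R) : R :=
  2 / sqrt PI * RInt (fun s => exp (- (s ^ 2))) 0 x.

Definition A (j : nat) (eps : R) : R :=
  if (3 <= j)%N && Nat.odd j then
    2 * (-1) ^ ((j - 1) / 2)%nat
      / (INR (j - 2) * INR (Factorial.fact ((j - 3) / 2)%nat) * sqrt PI)
  else eps.

(* Inner sum over all tuples (k_1,...,k_n) of nonnegative integers with
   sum_j j*k_j = n.  Such k_j automatically satisfy k_j <= n, so we index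
   the tuples by k : 'I_n -> 'I_(n+1), where k i stands for k_{i+1}. *)
Definition inner_sum (n : nat) (eps : R) : R :=
  \big[Rplus/0]_(k : {ffun 'I_n -> 'I_n.+1}
                 | (\sum_(i < n) i.+1 * nat_of_ord (k i))%N == n)
    \big[Rmult/1]_(i < n)
       (A i.+1 eps ^ (nat_of_ord (k i)) / INR (Factorial.fact (nat_of_ord (k i)))).

(* Main.v *)
Require Import Defs.
From Stdlib Require Import Reals Lra Lia Factorial.
From Coquelicot Require Import Coquelicot.
From mathcomp Require Import ssreflect ssrbool ssrfun eqtype ssrnat seq choice fintype finfun bigop.
From mathcomp Require Import ssralg poly ssrnum.
From mathcomp Require Import Rstruct zify.
From mathcomp Require ring.
Import GRing.Theory Num.Theory.

Close Scope R_scope.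

Section Comb.
Local Open Scope ring_scope.
Variable a : nat -> R.

Definition wt N M (f : {ffun 'I_N -> 'I_M}) : nat := (\sum_(i < N) i.+1 * f i)%N.
Arguments wt {N M}.
Definition w N M (f : {ffun 'I_N -> 'I_M}) : R := \prod_(i < N) (a i.+1 ^+ f i / (f i)`!%:R).
Arguments w {N M}.
Definition Ssum N M n : R := \sum_(f : {ffun 'I_N -> 'I_M} | wt f == n) w f.
Definition Q M j : {poly R} := \sum_(k < M) (a j ^+ k / k`!%:R) *: 'X^(j * k).
Definition P N M : {poly R} := \prod_(i < N) Q M i.+1.

Lemma prod_scaleX (I : finType) (c : I -> R) (e : I -> nat) :
  \prod_(i : I) (c i *: 'X^(e i)) = (\prod_i c i) *: 'X^(\sum_i e i) :> {poly R}.
Proof.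
rewrite -mul_polyC rmorph_prod -prodrXr -big_split /=.
by apply: eq_bigr => i _; rewrite mul_polyC.
Qed.

Lemma coef_P N M n : (P N M)`_n = Ssum N M n.
Proof.
rewrite /P /Q bigA_distr_bigA /= coef_sum /Ssum [RHS]big_mkcond /=.
apply: eq_bigr => f _; rewrite prod_scaleX coefZ coefXn /wt eq_sym.
by case: eqP => _; rewrite ?mulr1 ?mulr0.
Qed.

End Comb.

Lemma inner_sumE n eps : inner_sum n eps = Ssum (fun j => A j eps) n n.+1 n.
Proof.
rewrite /inner_sum /Ssum /w /wt. apply: eq_bigr => f _; apply: eq_bigr => i _.
by rewrite RpowE INRE factE.
Qed.


Close Scope R_scope.

Section Low.
Local Open Scope ring_scope.
Definition eqlow (K : nat) (p q : {poly R}) := forall n, (n < K)%N -> p`_n = q`_n.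

Lemma eqlow_refl K p : eqlow K p p. Proof. by []. Qed.
Lemma eqlow_sym K p q : eqlow K p q -> eqlow K q p.
Proof. by move=> h n hn; rewrite h. Qed.
Lemma eqlow_trans K p q r : eqlow K p q -> eqlow K q r -> eqlow K p r.
Proof. by move=> h1 h2 n hn; rewrite h1 ?h2. Qed.
Lemma eqlowD K p q p' q' : eqlow K p q -> eqlow K p' q' -> eqlow K (p + p') (q + q').
Proof. by move=> h1 h2 n hn; rewrite !coefD h1 ?h2. Qed.
Lemma eqlowM K p q p' q' : eqlow K p q -> eqlow K p' q' -> eqlow K (p * p') (q * q').
Proof.
move=> h1 h2 n hn; rewrite !coefM; apply: eq_bigr => i _.
rewrite h1 ?h2 //.
  by apply: leq_ltn_trans hn; apply: leq_subr.
by apply: leq_ltn_trans hn; rewrite -ltnS.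
Qed.
Lemma eqlowZ K c p q : eqlow K p q -> eqlow K (c *: p) (c *: q).
Proof. by move=> h n hn; rewrite !coefZ h. Qed.
Lemma eqlow_prod K (I : Type) (r : seq I) (F G : I -> {poly R}) :
  (forall i, eqlow K (F i) (G i)) -> eqlow K (\prod_(i <- r) F i) (\prod_(i <- r) G i).
Proof.
move=> h; apply: (big_ind2 (eqlow K)) => //.
by move=> *; apply: eqlowM.
Qed.
Lemma eqlow_sum K (I : Type) (r : seq I) (F G : I -> {poly R}) :
  (forall i, eqlow K (F i) (G i)) -> eqlow K (\sum_(i <- r) F i) (\sum_(i <- r) G i).
Proof.
move=> h; apply: (big_ind2 (eqlow K)) => //.
by move=> *; apply: eqlowD.
Qed.
Lemma eqlowXn K m c : (K <= m)%N -> eqlow K (c *: 'X^m) 0.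
Proof.
move=> hm n hn; rewrite coefZ coefXn coef0.
by rewrite (ltn_eqF (leq_trans hn hm)) mulr0.
Qed.
Lemma eqlow_weak K K' p q : (K' <= K)%N -> eqlow K p q -> eqlow K' p q.
Proof. by move=> hk h n hn; apply: h; apply: leq_trans hk. Qed.

End Low.

Section QL.
Local Open Scope ring_scope.
Variable a : nat -> R.

Lemma eqlow_sum0 K (I : Type) (r : seq I) (F : I -> {poly R}) :
  (forall i, eqlow K (F i) 0) -> eqlow K (\sum_(i <- r) F i) 0.
Proof.
move=> h n hn; rewrite coef_sum coef0 big1 // => i _; rewrite h // coef0 //.
Qed.

Lemma Q_trunc K M j : (K <= M)%N -> (0 < j)%N -> eqlow K (Q a M j) (Q a K j).
Proof.
move=> hKM hj; rewrite /Q -(subnKC hKM) big_split_ord /=.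
rewrite -[X in eqlow _ _ X]addr0; apply: eqlowD => //.
apply: eqlow_sum0 => i; apply: eqlowXn.
by apply: leq_trans (leq_addr i K) _; rewrite leq_pmull.
Qed.

Lemma Q_one K M j : (K <= j)%N -> eqlow K (Q a M.+1 j) 1.
Proof.
move=> hj; rewrite /Q big_ord_recl /= muln0 expr0 fact0 divr1 scale1r.
rewrite -[X in eqlow _ _ X]addr0; apply: eqlowD => //.
apply: eqlow_sum0 => i; apply: eqlowXn.
by apply: leq_trans hj _; rewrite /bump /= leq_pmulr.
Qed.

Lemma P_reindex m n : (m <= n)%N -> eqlow m.+1 (P a n n.+1) (P a m m.+1).
Proof.
move=> hmn.
apply: (@eqlow_trans _ _ (P a n m.+1)).
  rewrite /P; apply: eqlow_prod => i; apply: Q_trunc => //.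
rewrite /P -(subnKC hmn) big_split_ord /=.
rewrite -[X in eqlow _ _ X]mulr1; apply: eqlowM => //.
apply: (@eqlow_trans _ _ (\prod_(i < n - m) (1 : {poly R}))); last by rewrite big1.
apply: eqlow_prod => i; apply: Q_one.
by rewrite ltnS leq_addr.
Qed.

End QL.


Close Scope R_scope.

Module CoefStep.
Import ring.
Local Open Scope ring_scope.
Lemma coef_step (a : nat -> R) (j i : nat) : (0 < j)%N ->
  (a j ^+ i.+1 / (i.+1)`!%:R) * (j * i.+1)%:R = j%:R * a j * (a j ^+ i / i`!%:R).
Proof.
move=> hj; rewrite factS natrM exprS natrM.
have h1 : (i.+1)%:R != 0 :> R by rewrite pnatr_eq0.
have h2 : (i`!)%:R != 0 :> R by rewrite pnatr_eq0 -lt0n fact_gt0.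
field; by rewrite h2 -mulrS h1.
Qed.
End CoefStep.
Import CoefStep.

Section Th.
Local Open Scope ring_scope.
Variable a : nat -> R.
Definition theta (p : {poly R}) := 'X * p^`().

Lemma thetaM p q : theta (p * q) = theta p * q + p * theta q.
Proof. by rewrite /theta derivM mulrDr mulrA mulrCA. Qed.

Lemma thetaXn n : theta 'X^n = 'X^n *+ n.
Proof.
rewrite /theta derivXn; case: n => [|n]; first by rewrite !mulr0n mulr0.
by rewrite /= mulrnAr -exprS.
Qed.



Lemma theta_Q M j : (0 < j)%N -> eqlow M (theta (Q a M j)) ((j%:R * a j) *: 'X^j * Q a M j).
Proof.
move=> hj; case: M => [|M]; first by move=> n.
rewrite /Q /theta raddf_sum mulr_sumr big_ord_recl /= derivZ -scalerAr.
rewrite -/(theta _) thetaXn muln0 mulr0n scaler0 add0r.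
rewrite mulr_sumr big_ord_recr /=.
rewrite -[X in eqlow _ X _]addr0; apply: eqlowD.
  apply: eqlow_sum => i; rewrite derivZ -scalerAr -/(theta _) thetaXn /bump /=.
  rewrite !add1n -scalerAl -scalerAr scalerA -exprD -mulnS.
  by rewrite -scalerMnr scalerMnl -mulr_natr coef_step // mulrA.
apply: eqlow_sym; rewrite -scalerAl -scalerAr scalerA -exprD.
apply: eqlowXn; rewrite -mulnS; by rewrite leq_pmull.
Qed.

Definition L N : {poly R} := \sum_(i < N) ((i.+1)%:R * a i.+1) *: 'X^(i.+1).

Lemma theta_P N M : eqlow M (theta (P a N M)) (L N * P a N M).
Proof.
elim: N => [|N IH].
  by rewrite /P /L !big_ord0 /theta derivC mulr0 mul0r.
rewrite /P /L !big_ord_recr /= -/(P a N M) -/(L N) thetaM.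
set t := ((N.+1)%:R * a N.+1) *: 'X^(N.+1).
have E : (L N + t) * (P a N M * Q a M N.+1) = L N * P a N M * Q a M N.+1 + P a N M * (t * Q a M N.+1).
  by rewrite mulrDl mulrA; congr (_ + _); rewrite mulrCA.
rewrite E.
apply: eqlowD; first by apply: eqlowM.
by apply: eqlowM => //; apply: theta_Q.
Qed.

Lemma coef_theta p n : (theta p)`_n.+1 = p`_n.+1 *+ n.+1.
Proof. by rewrite /theta coefXM /= coef_deriv. Qed.

Definition cc n := Ssum a n n.+1 n.

Lemma recur n : cc n.+1 *+ n.+1 =
  \sum_(k < n.+1) ((k.+1)%:R * a k.+1) * cc (n - k).
Proof.
have h := theta_P n.+1 n.+2 n.+1 (ltnSn n.+1).
rewrite coef_theta coef_P in h; rewrite /cc h.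
rewrite /L mulr_suml coef_sum; apply: eq_bigr => k _.
rewrite -scalerAl coefZ coefXnM ltnS leqNgt (ltn_ord k) /=.
congr (_ * _); rewrite subSS -coef_P; apply: P_reindex.
  by apply: leq_trans (leq_subr _ _) _.
by [].
Qed.

End Th.


Close Scope R_scope.
Open Scope R_scope.

Lemma exp_series y : is_series (fun n => y ^ n / INR (fact n)) (exp y).
Proof.
unfold exp; destruct (exist_exp y) as [l H]; simpl.
apply is_series_Reals. unfold exp_in in H.
intros eps Heps; destruct (H eps Heps) as [N HN]; exists N; intros n Hn.
specialize (HN n Hn). unfold R_dist in *.
replace (sum_f_R0 (fun n0 : nat => y ^ n0 / INR (fact n0)) n)
  with (sum_f_R0 (fun i : nat => / INR (fact i) * y ^ i) n); auto.
clear. induction n as [|n IH]; simpl; [|rewrite IH]; unfold Rdiv; ring.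
Qed.

Lemma is_series_0 : is_series (fun _ : nat => 0) 0.
Proof.
apply is_series_Reals. intros eps Heps; exists 0%nat; intros n _.
rewrite sum_cte. unfold R_dist. rewrite Rmult_0_l Rminus_0_r Rabs_R0; auto.
Qed.

Definition es (sg : R) (n : nat) : R :=
  if Nat.even n then sg ^ (Nat.div2 n) / INR (fact (Nat.div2 n)) else 0.

Lemma es_even sg m : es sg (2 * m)%coq_nat = sg ^ m / INR (fact m).
Proof. unfold es; rewrite Nat.even_even Nat.div2_double; auto. Qed.
Lemma es_odd sg m : es sg ((2 * m)%coq_nat + 1)%coq_nat = 0.
Proof. unfold es; rewrite Nat.even_odd; auto. Qed.

Lemma es_pseries sg s : is_pseries (es sg) s (exp (sg * s ^ 2)).
Proof.
replace (exp (sg * s ^ 2)) with (exp (sg * s ^ 2) + s * 0) by ring.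
apply is_pseries_odd_even.
- unfold is_pseries. eapply is_series_ext; [|apply (exp_series (sg * s ^ 2))].
  intros n; simpl. rewrite es_even pow_n_pow. rewrite Rpow_mult_distr.
  change (@scal R_AbsRing R_NormedModule) with (@mult R_Ring); unfold mult; simpl. unfold Rdiv; ring.
- unfold is_pseries. eapply is_series_ext; [|apply is_series_0].
  intros n; simpl. rewrite es_odd. change (@scal R_AbsRing R_NormedModule) with (@mult R_Ring); unfold mult; simpl. ring.
Qed.

Lemma radius_inf (a : nat -> R) : (forall s, CV_disk a s) ->
  forall x, Rbar_lt (Rabs x) (CV_radius a).
Proof.
intros H x. destruct (Lub_Rbar_correct (CV_disk a)) as [ub _].
specialize (ub (Rabs x + 1) (H _)). unfold CV_radius.
destruct (Lub_Rbar (CV_disk a)) as [r| |]; simpl in *; auto; lra.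
Qed.

Lemma es_abs sg n : Rabs (es sg n) = es (Rabs sg) n.
Proof.
unfold es; destruct (Nat.even n).
- rewrite Rabs_div; [|apply not_0_INR, fact_neq_0]. rewrite <- RPow_abs.
  rewrite (Rabs_pos_eq (INR _)); [auto | apply pos_INR].
- apply Rabs_R0.
Qed.

Lemma es_radius sg x : Rbar_lt (Rabs x) (CV_radius (es sg)).
Proof.
apply radius_inf. intros s. unfold CV_disk.
eexists. eapply is_series_ext; [|apply (es_pseries (Rabs sg) (Rabs s))].
intros n; simpl. rewrite Rabs_mult es_abs -RPow_abs pow_n_pow.
change (@scal R_AbsRing R_NormedModule) with (@mult R_Ring); unfold mult; simpl. ring.
Qed.

Lemma PSeries_es_m1 s : PSeries (es (-1)) s = exp (- (s ^ 2)).
Proof.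
apply is_pseries_unique. replace (- (s^2)) with (-1 * s^2) by ring. apply es_pseries.
Qed.

Lemma erf_PSeries x : erf x = 2 / sqrt PI * PSeries (PS_Int (es (-1))) x.
Proof.
unfold erf. rewrite <- RInt_PSeries by apply es_radius.
f_equal. apply RInt_ext. intros; rewrite PSeries_es_m1; auto.
Qed.

Definition gc : nat -> R :=
  PS_scal (- (2 / sqrt PI)) (PS_incr_1 (PS_incr_1 (PS_Int (es (-1))))).

Lemma sqrtPI_pos : 0 < sqrt PI.
Proof. apply sqrt_lt_R0, PI_RGT_0. Qed.

Lemma gc_radius x : Rbar_lt (Rabs x) (CV_radius gc).
Proof.
unfold gc. rewrite CV_radius_scal.
- rewrite (CV_radius_incr_1 (PS_incr_1 (PS_Int (es (-1))))) (CV_radius_incr_1 (PS_Int (es (-1)))) CV_radius_Int. apply es_radius.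
- have := sqrtPI_pos. intros h. unfold Rdiv.
  apply Ropp_neq_0_compat, Rmult_integral_contrapositive; split; [lra|].
  apply Rinv_neq_0_compat; lra.
Qed.

Lemma gc_PSeries x : PSeries gc x = - (x ^ 2 * erf x).
Proof.
unfold gc. rewrite PSeries_scal (PSeries_incr_1 (PS_incr_1 (PS_Int (es (-1))))) (PSeries_incr_1 (PS_Int (es (-1)))) erf_PSeries. simpl. ring.
Qed.

Lemma gc_eq j : gc j = A j 0.
Proof.
unfold gc, PS_scal. change (@scal R_AbsRing R_NormedModule) with (@mult R_Ring); unfold mult; simpl.
destruct j as [|[|[|k]]].
1-3: unfold A; simpl; unfold zero; simpl; ring.
change (PS_incr_1 (PS_incr_1 (PS_Int (es (-1)))) k.+3) with (es (-1) k / INR (S k)).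
unfold A.
have H3 : (3 <= k.+3)%N = true by [].
rewrite H3 andTb.
destruct (Nat.Even_or_Odd k) as [[m ->]|[m ->]].
- rewrite es_even.
  have Ho : Nat.odd (2 * m)%coq_nat.+3 = true.
  { change ((2 * m)%coq_nat.+3) with (3 + (2 * m)%coq_nat)%coq_nat.
    rewrite Nat.odd_add_mul_2; reflexivity. }
  rewrite Ho.
  replace ((2*m)%coq_nat.+3 - 1)%N with (S m * 2)%coq_nat by lia.
  replace ((2*m)%coq_nat.+3 - 3)%N with (m * 2)%coq_nat by lia.
  replace ((2*m)%coq_nat.+3 - 2)%N with (S (2 * m)%coq_nat) by lia.
  rewrite !Nat.div_mul; try lia.
  have h1 := sqrtPI_pos.
  have h2 : INR (fact m) <> 0 by apply not_0_INR, fact_neq_0.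
  have h3 : INR (S (2 * m)%coq_nat) <> 0 by apply not_0_INR; lia.
  simpl pow. field. split; [lra|split; auto].
- rewrite es_odd.
  replace (((2*m)%coq_nat + 1)%coq_nat.+3) with (4 + (2 * m)%coq_nat)%coq_nat by lia.
  rewrite Nat.odd_add_mul_2. change (Nat.odd 4) with false. unfold Rdiv; ring.
Qed.


Close Scope R_scope.
Open Scope R_scope.

Lemma continuity_prod (I : finType) (F : I -> R -> R) (P : pred I) :
  (forall i, continuity (F i)) ->
  continuity (fun x => (\prod_(i | P i) ((F i) x)))%R.
Proof.
move=> H; elim: (index_enum I)=> [|a l IHl].
  set f:= fun _ => _.
  have Hf: (fun x=> 1) =1 f by move=> x; rewrite /f big_nil.
  by apply: (continuity_eq Hf); exact: continuity_const.
set f := fun _ => _.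
case Hpa: (P a).
  have Hf: (fun x => F a x * \prod_(i <- l | P i) F i x)%R =1 f.
    by move=> x; rewrite /f big_cons Hpa.
  apply: (continuity_eq Hf); apply: continuity_mult=> //.
have Hf: (fun x => \prod_(i <- l | P i) F i x)%R =1 f.
  by move=> x; rewrite /f big_cons Hpa.
exact: (continuity_eq Hf).
Qed.

Lemma continuity_A j : continuity (fun e => A j e).
Proof.
rewrite /A; destruct ((3 <= j)%N && Nat.odd j).
- by apply: continuity_const => x y.
- exact: derivable_continuous derivable_id.
Qed.

Lemma inner_cont n : continuity (fun e => inner_sum n e).
Proof.
apply: (continuity_eq (f := fun e => Ssum (fun j => A j e) n n.+1 n)).
  by move=> e; rewrite inner_sumE.
rewrite /Ssum /w; apply: continuity_sum => f _.
apply: continuity_prod => i.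
apply: continuity_mult; first by apply: continuity_exp; apply: continuity_A.
by apply: continuity_const => x y.
Qed.

Definition a0 (j : nat) : R := A j 0.
Definition c (n : nat) : R := cc a0 n.

Lemma inner_lim n : filterlim (fun eps => inner_sum n eps) (at_right 0) (locally (c n)).
Proof.
apply: (filterlim_filter_le_1 (F := locally 0)); first by apply: filter_le_within.
have -> : c n = inner_sum n 0 by rewrite inner_sumE.
by apply/continuity_pt_filterlim; apply: inner_cont.
Qed.

Lemma recur_R n : INR (S n) * c (S n) =
  sum_f_R0 (fun k => INR (S k) * a0 (S k) * c (n - k)) n.
Proof.
rewrite sum_f_R0E big_mkord INRE RmultE mulr_natl /c recur.
by apply: eq_bigr => k _; rewrite !INRE !RmultE.
Qed.

Lemma c0 : c 0 = 1.
Proof. by rewrite /c /cc -coef_P /P big_ord0 coef1. Qed.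

Lemma a0_radius x : Rbar_lt (Rabs x) (CV_radius a0).
Proof.
by rewrite -(CV_radius_ext gc a0 gc_eq); apply: gc_radius.
Qed.

Lemma term_le_sum (f : nat -> R) N m : (forall k, 0 <= f k) -> (m <= N)%coq_nat ->
  f m <= sum_f_R0 f N.
Proof.
intros Hf Hm. induction N as [|N IH].
- have -> : m = 0%nat by lia. simpl; lra.
- simpl. destruct (Nat.eq_dec m (S N)) as [->|Hne].
  + have := cond_pos_sum f N Hf. lra.
  + have := IH ltac:(lia). have := Hf (S N). lra.
Qed.

Lemma sum_ext (f g : nat -> R) N : (forall k, (k <= N)%coq_nat -> f k = g k) ->
  sum_f_R0 f N = sum_f_R0 g N.
Proof.
intros H. induction N as [|N IH]; simpl.
- apply H; lia.
- rewrite IH; [|intros; apply H; lia]. rewrite H; [|lia]. reflexivity.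
Qed.

Lemma c_bound (R0 : R) : 0 < R0 -> exists K, 0 <= K /\ forall n, Rabs (c n) * R0 ^ n <= K.
Proof.
intros HR.
set T := Series (fun k => Rabs (PS_derive a0 k * R0 ^ k)).
have exT : ex_series (fun k => Rabs (PS_derive a0 k * R0 ^ k)).
{ apply CV_disk_inside. rewrite CV_radius_derive. apply a0_radius. }
have hpart : forall n, sum_f_R0 (fun k => INR (S k) * Rabs (a0 (S k)) * R0 ^ (S k)) n <= R0 * T.
{ intros n.
  rewrite (sum_ext _ (fun k => Rabs (PS_derive a0 k * R0 ^ k) * R0)).
  - rewrite -scal_sum. apply Rmult_le_compat_l; [lra|].
    apply sum_incr; [|intros; apply Rabs_pos].
    have := Series_correct _ exT. rewrite is_series_Reals. auto.
  - intros k _. unfold PS_derive. rewrite !Rabs_mult (Rabs_pos_eq (INR _)) ?(Rabs_pos_eq (R0 ^ k)).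
    + simpl. ring.
    + apply pow_le; lra.
    + apply pos_INR. }
destruct (INR_unbounded (R0 * T)) as [N0 HN0].
set K := 1 + sum_f_R0 (fun n => Rabs (c n) * R0 ^ n) N0.
have hpos : forall n, 0 <= Rabs (c n) * R0 ^ n.
{ intros n; apply Rmult_le_pos; [apply Rabs_pos|apply pow_le; lra]. }
have HK : 0 <= K.
{ have := cond_pos_sum _ N0 hpos. unfold K; lra. }
exists K; split; auto.
intro n; induction n as [n IH] using (well_founded_induction Wf_nat.lt_wf).
destruct (Compare_dec.le_lt_dec n N0) as [Hn|Hn].
{ have := term_le_sum _ N0 n hpos Hn. unfold K; lra. }
destruct n as [|m]; [lia|].
have HSm : 0 < INR (S m) by apply lt_0_INR; lia.
apply (Rmult_le_reg_l (INR (S m))); auto.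
have E : INR (S m) * (Rabs (c (S m)) * R0 ^ S m) = Rabs (INR (S m) * c (S m)) * R0 ^ S m.
{ rewrite Rabs_mult (Rabs_pos_eq (INR _)); [ring|lra]. }
rewrite E recur_R.
apply Rle_trans with (sum_f_R0 (fun k => Rabs (INR (S k) * a0 (S k) * c (m - k))) m * R0 ^ S m).
{ apply Rmult_le_compat_r; [apply pow_le; lra|apply sum_f_R0_triangle]. }
rewrite Rmult_comm scal_sum.
apply Rle_trans with (sum_f_R0 (fun k => INR (S k) * Rabs (a0 (S k)) * R0 ^ (S k) * K) m).
{ apply sum_Rle. intros k Hk.
  have Hp : R0 ^ S m = R0 ^ S k * R0 ^ (m - k) by rewrite -pow_add; f_equal; lia.
  rewrite Hp !Rabs_mult (Rabs_pos_eq (INR _)); [|apply pos_INR].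
  have := IH (m - k)%N ltac:(lia).
  have : 0 <= INR (S k) * Rabs (a0 (S k)) * R0 ^ S k.
  { apply Rmult_le_pos; [apply Rmult_le_pos; [apply pos_INR|apply Rabs_pos]|apply pow_le; lra]. }
  intros h1 h2.
  replace (INR (S k) * Rabs (a0 (S k)) * Rabs (c (m - k)) * (R0 ^ S k * R0 ^ (m - k)))
    with ((INR (S k) * Rabs (a0 (S k)) * R0 ^ S k) * (Rabs (c (m - k)) * R0 ^ (m - k))) by ring.
  apply Rmult_le_compat_l; auto. }
rewrite -scal_sum.
have := hpart m.
have : INR N0 <= INR (S m) by apply le_INR; lia.
intros h1 h2.
rewrite Rmult_comm. apply Rmult_le_compat_r; auto. lra.
Qed.

Lemma c_radius x : Rbar_lt (Rabs x) (CV_radius c).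
Proof.
apply radius_inf; intros s. unfold CV_disk.
set R0 := 2 * Rabs s + 1.
have HR0 : 0 < R0 by have := Rabs_pos s; unfold R0; lra.
destruct (c_bound R0 HR0) as [K [HK HB]].
set q := Rabs s / R0.
have Hq0 : 0 <= q by apply Rmult_le_pos; [apply Rabs_pos|apply Rlt_le, Rinv_0_lt_compat; auto].
have Hq1 : q < 1.
{ unfold q. apply (Rmult_lt_reg_r R0); auto. unfold Rdiv. rewrite Rmult_assoc Rinv_l; [|lra].
  have := Rabs_pos s. unfold R0; lra. }
apply (@ex_series_le R_AbsRing R_CompleteNormedModule _ (fun n => K * q ^ n)).
- intros n. change (norm (Rabs (c n * s ^ n))) with (Rabs (Rabs (c n * s ^ n))).
  rewrite Rabs_Rabsolu Rabs_mult -RPow_abs.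
  have Es : Rabs s = R0 * q by unfold q; field; lra.
  rewrite Es Rpow_mult_distr -Rmult_assoc.
  apply Rmult_le_compat_r; [apply pow_le; auto|apply HB].
- apply (ex_series_ext (fun n => scal K (q ^ n))).
  + intros n; reflexivity.
  + apply (@ex_series_scal_l R_AbsRing R_NormedModule), ex_series_geom. rewrite Rabs_pos_eq; auto.
Qed.


Close Scope R_scope.
Open Scope R_scope.

Lemma is_derive_val (f : R -> R) t l l' : is_derive f t l -> l = l' -> is_derive f t l'.
Proof. by move=> H <-. Qed.

Lemma h_eq x : PSeries c x = exp (PSeries a0 x).
Proof.
set h := PSeries c. set g := PSeries a0.
have Dh : forall t, is_derive h t (PSeries (PS_derive a0) t * h t).
{ intro t. have := is_derive_PSeries c t (c_radius t).
  rewrite (PSeries_ext (PS_derive c) (PS_mult (PS_derive a0) c)).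
  - rewrite PSeries_mult; [auto| rewrite CV_radius_derive; apply a0_radius | apply c_radius].
  - intros n; unfold PS_derive, PS_mult; apply recur_R. }
have Dg : forall t, is_derive g t (PSeries (PS_derive a0) t).
{ intro t. apply is_derive_PSeries, a0_radius. }
set phi := fun t => h t * exp (- g t).
have Dphi : forall t, is_derive phi t 0.
{ intro t.
  have He : is_derive (fun u => exp (- g u)) t (scal (opp (PSeries (PS_derive a0) t)) (exp (- g t))).
  { apply (is_derive_comp exp (fun u => - g u)). apply is_derive_exp.
    apply (is_derive_opp g). apply Dg. }
  have Hm := is_derive_mult h (fun u => exp (- g u)) t _ _ (Dh t) He ltac:(intros; apply Rmult_comm).
  unfold phi. apply (is_derive_val _ _ _ _ Hm).
  change (Rplus (Rmult (PSeries (PS_derive a0) t * h t) (exp (- g t)))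
    (Rmult (h t) (Rmult (- PSeries (PS_derive a0) t) (exp (- g t)))) = 0).
  ring. }
have Hc : phi x = phi 0.
{ have H1 := is_RInt_derive phi (fun _ => 0) 0 x (fun t _ => Dphi t)
     (fun t _ => continuous_const (0 : R) t).
  have H2 := is_RInt_const 0 x (0 : R).
  have := is_RInt_unique _ _ _ _ H1. rewrite (is_RInt_unique _ _ _ _ H2).
  change (@minus R_AbelianGroup) with Rminus.
  rewrite scal_zero_r. change (@zero R_AbelianGroup) with 0. change (0 = phi x - phi 0 -> phi x = phi 0). lra. }
have H0 : phi 0 = 1.
{ unfold phi, h, g. rewrite !PSeries_0 c0.
  have -> : a0 0 = 0 by reflexivity.
  rewrite Ropp_0 exp_0; ring. }
have : h x * exp (- g x) * exp (g x) = exp (g x) by rewrite -/(phi x) Hc H0; ring.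
rewrite Rmult_assoc -exp_plus.
have -> : - g x + g x = 0 by ring.
rewrite exp_0 Rmult_1_r. auto.
Qed.

Theorem lemma2 (x : R) :
  exists c : nat -> R,
    (forall n : nat,
        filterlim (fun eps => inner_sum n eps) (at_right 0) (locally (c n))) /\
    is_series (fun n : nat => c n * x ^ (n + 1) / INR (n + 1))
      (RInt (fun xi => exp (- (xi ^ 2 * erf xi))) 0 x).
Proof.
exists c; split; [apply inner_lim|].
have Hf : forall xi, exp (- (xi ^ 2 * erf xi)) = PSeries c xi.
{ intros xi. rewrite h_eq -gc_PSeries. f_equal. apply PSeries_ext. intros n; rewrite gc_eq; reflexivity. }
rewrite (RInt_ext _ (PSeries c)); [|intros; apply Hf].
rewrite RInt_PSeries; [|apply c_radius].
have Hr : Rbar_lt (Rabs x) (CV_radius (PS_Int c)) by rewrite CV_radius_Int; apply c_radius.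
have Hs := PSeries_correct (PS_Int c) x (CV_radius_inside _ _ Hr).
unfold is_pseries in Hs.
set L := PSeries (PS_Int c) x in Hs *.
set a := fun k : nat => scal (pow_n x k) (PS_Int c k) in Hs.
have Ha0 : a 0%nat = 0.
{ unfold a. change (Rmult (pow_n x 0) (PS_Int c 0) = 0). rewrite pow_n_pow; simpl; ring. }
have Hs' : is_series a (plus L (a 0%nat)).
{ have -> : plus L (a 0%nat) = L by rewrite Ha0; change (L + 0 = L); ring.
  exact Hs. }
have H1 := is_series_incr_1 a L Hs'.
eapply is_series_ext; [|exact H1].
intros n; unfold a. change (Rmult (pow_n x (S n)) (PS_Int c (S n)) = c n * x ^ (n + 1) / INR (n + 1)).
rewrite pow_n_pow addn1. simpl. unfold Rdiv. ring.
Qed.
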